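(* Let $\{\widehat X_n(x):x\in\mathbb{R}^2\}_{n\ge0}$ be an i.i.d. sequence of random fields whose variables $\widehat X_n(x)$ are all mutually independent with standard Fréchet distribution. Set $X_n(x)=\tfrac23\widehat X_n(x)\vee\tfrac13\widehat X_{n-1}(x)$, let $\{Z_n\}_{n\ge1}$ be i.i.d. standard Fréchet random variables independent of $\{\widehat X_n\}$, set $Z_n(x)=Z_n$ for all $x$, let $\alpha:\mathbb{R}^2\to(0,\infty)$, and $Y_n(x)=X_n(x)\vee Z_n^{1/\alpha(x)}$. Then for all $n\ge1$ and $x\in\mathbb{R}^2$, $r\ge1$: $$\lambda(Y_{n+r}(x)\mid Y_n(x))=\begin{cases}0,& \alpha(x)<1 \text{ or } r>1,\\ 1/6,& \alpha(x)=1\text{ and } r=1,\\ 1/3,& \alpha(x)>1 \text{ and } r=1;\end{cases}$$ for $x\neq x'$ and $r\ge1$, $\lambda(Y_{n+r}(x')\mid Y_n(x))=0$; and for $x\ne x'$, $$\lambda(Y_n(x')\mid Y_n(x))=\begin{cases}1,& \alpha(x')\le\alpha(x)<1,\\ 1/2,& \alpha(x')\le\alpha(x)=1,\\ 0,&\text{otherwise.}\end{cases}$$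
   Context: A random variable has the standard (unit) Fréchet distribution if $P(\cdot\le z)=e^{-1/z}$ for $z>0$. For random variables $U,V$, the tail dependence coefficient is $\lambda(V\mid U)=\lim_{y\to\infty}P(V>y\mid U>y)$. $a\vee b=\max(a,b)$. *)

(* Defs.v *)
From HB Require Import structures.
From mathcomp Require Import all_boot all_order all_algebra.
From mathcomp Require Import all_classical all_reals all_analysis.
Set Implicit Arguments. Unset Strict Implicit. Unset Printing Implicit Defensive.
Import Order.TTheory GRing.Theory Num.Theory.
Import numFieldNormedType.Exports.
Local Open Scope classical_set_scope.
Local Open Scope ring_scope.

Section Defs.
Context {d : measure_display} {T : measurableType d} {R : realType}.
Variable P : probability T R.

Definition mutually_independent (I : eqType) (W : I -> T -> R) : Prop :=
  (forall i, measurable_fun setT (W i)) /\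
  forall (s : seq I) (B : I -> set R), uniq s ->
    (forall i, measurable (B i)) ->
    P (\big[setI/setT]_(i <- s) (W i @^-1` B i)) =
    (\prod_(i <- s) P (W i @^-1` B i))%E.

Definition std_frechet (W : T -> R) : Prop :=
  forall z : R, 0 < z -> P (W @^-1` `]-oo, z]) = (expR (- z^-1))%:E.

Definition condP (A B : set T) : R := fine (P (A `&` B)) / fine (P B).

Definition tail_dep (V U : T -> R) (l : R) : Prop :=
  (fun y : R => condP [set t | y < V t] [set t | y < U t]) @ +oo --> l.
End Defs.

(* X_n(x) = 2/3 Xh_n(x) \/ 1/3 Xh_{n-1}(x)  (used for n >= 1) *)
Definition Xfield {T : Type} {R : realType} (Xh : nat -> R * R -> T -> R)
  (n : nat) (x : R * R) (t : T) : R :=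
  Num.max (2/3 * Xh n x t) (1/3 * Xh n.-1 x t).

Definition Yfield {T : Type} {R : realType} (Xh : nat -> R * R -> T -> R)
  (Z : nat -> T -> R) (alpha : R * R -> R) (n : nat) (x : R * R) (t : T) : R :=
  Num.max (Xfield Xh n x t) (Z n t `^ (alpha x)^-1).

(* Main.v *)
Require Import Defs.
From HB Require Import structures.
From mathcomp Require Import all_boot all_order all_algebra.
From mathcomp Require Import all_classical all_reals all_analysis.
Import Order.TTheory GRing.Theory Num.Theory.
Import numFieldNormedType.Exports.
Local Open Scope classical_set_scope.
Local Open Scope ring_scope.
From mathcomp Require Import ring lra zify.
From HB Require Import structures.
From mathcomp Require Import all_boot all_order all_algebra.
From mathcomp Require Import all_classical all_reals all_analysis.
Import Order.TTheory GRing.Theory Num.Theory.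
Import numFieldNormedType.Exports.
Local Open Scope classical_set_scope.
Local Open Scope ring_scope.
Lemma powR_cvgy {R : realType} (b : R) : 0 < b -> (fun y : R => y `^ b) @ +oo --> +oo.
Proof.
move=> b0; apply/cvgryPge => A.
have M1 : 1 <= Num.max A 1 by rewrite le_max lexx orbT.
near=> y.
have My : (Num.max A 1) `^ b^-1 <= y by near: y; apply: nbhs_pinfty_ge; exact: num_real.
have hA : A <= Num.max A 1 by rewrite le_max lexx.
rewrite (le_trans hA) // -[leLHS](@powRr1 _ (Num.max A 1)); last by rewrite (le_trans _ M1).
rewrite -(mulVf (lt0r_neq0 b0)) powRrM ge0_ler_powR ?ltW // nnegrE ?powR_ge0 //.
Unshelve. all: by end_near. Qed.

Lemma powRN_cvg0 {R : realType} (b : R) : 0 < b -> (fun y : R => y `^ (- b)) @ +oo --> 0.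
Proof.
move=> b0.
have -> : (fun y : R => y `^ (- b)) = (fun y => (y `^ b)^-1).
  by apply/funext => y; rewrite powRN.
apply/gtr0_cvgV0; last exact: powR_cvgy.
near=> y; apply: powR_gt0; near: y; exact: nbhs_pinfty_gt.
Unshelve. all: by end_near. Qed.
From mathcomp Require Import ring lra.
Lemma key_lim {R : realType} (A B S : R -> R) (L : R) :
  (\forall y \near +oo, 0 < A y /\ 0 <= S y) ->
  A @ +oo --> 0 -> B @ +oo --> 0 -> (fun y => S y / A y) @ +oo --> L ->
  (fun y => (1 - expR (- B y)) + expR (- A y - B y) * ((expR (S y) - 1) / (1 - expR (- A y))))
    @ +oo --> L.
Proof.
move=> pos hA hB hSA.
have hS : S @ +oo --> 0.
  have h : (fun y => S y / A y * A y) @ +oo --> L * 0 by apply: cvgM.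
  rewrite mulr0 in h.
  have e : {near +oo, (fun y => S y / A y * A y) =1 S}.
    by near=> y; rewrite /= divfK //; apply: lt0r_neq0; have [] := near pos y.
  exact: cvg_trans (near_eq_cvg e) h.
have ex (f : R -> R) : f @ +oo --> 0 -> (fun y => expR (f y)) @ +oo --> (1:R).
  move=> hf; rewrite -expR0; exact: (continuous_cvg _ (@continuous_expR R 0) hf).
have e1 : (fun y => 1 - expR (- B y)) @ +oo --> 0.
  rewrite -(subrr 1); apply: cvgB; first exact: cvg_cst.
  by apply: ex; rewrite -oppr0; apply: cvgN.
have e2 : (fun y => expR (- A y - B y)) @ +oo --> (1:R).
  have h : (fun y => - A y - B y) @ +oo --> - 0 - 0 by apply: cvgB => //; apply: cvgN.
  by rewrite oppr0 addr0 in h; apply: (ex _ h).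
have e3 : (fun y => (expR (S y) - 1) / (1 - expR (- A y))) @ +oo --> L.
  apply: (@squeeze_cvgr _ _ _ _ (fun y => S y / A y) (fun y => S y / A y * expR (S y + A y))) => //; last first.
    rewrite -[X in _ --> X]mulr1; apply: cvgM => //.
    have h : (fun y => S y + A y) @ +oo --> 0 + 0 by apply: cvgD.
    by rewrite addr0 in h; apply: (ex _ h).
  near=> y; have [a0 s0] : 0 < A y /\ 0 <= S y by near: y.
  have E1 := expR_ge1Dx (S y).
  have E2 := expR_ge1Dx (- S y).
  have E3 := expR_ge1Dx (A y).
  have E4 := expR_ge1Dx (- A y).
  have d0 : 0 < 1 - expR (- A y) by rewrite subr_gt0 expR_lt1 oppr_lt0.
  have Es := expR_gt0 (S y).
  have Ea := expR_gt0 (A y).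
  have ENs : expR (- S y) * expR (S y) = 1 by rewrite -expRD addNr expR0.
  have ENa : expR (- A y) * expR (A y) = 1 by rewrite -expRD addNr expR0.
  apply/andP; split.
    rewrite ler_pdivrMr // mulrAC ler_pdivlMr //. nra.
  rewrite ler_pdivrMr // expRD.
  have -> : S y / A y * (expR (S y) * expR (A y)) * (1 - expR (- A y)) =
     (S y * (expR (S y) * expR (A y)) * (1 - expR (- A y))) / A y.
    by field; apply: lt0r_neq0.
  rewrite ler_pdivlMr //.
  set E := expR (S y) in E1 E2 Es ENs *; set G := expR (A y) in E3 Ea ENa *.
  set F := expR (- A y) in E4 d0 ENa *; set H := expR (- S y) in E2 ENs.
  have h1 : E - 1 <= S y * E by nra.
  have h2 : A y * F <= 1 - F by nra.
  have h3 : (E - 1) * A y <= S y * E * A y by nra.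
  have h4 : S y * E * A y = S y * E * G * (A y * F) by rewrite -[in LHS](mulr1 (A y)) -ENa; ring.
  have h5 : 0 <= S y * E * G by rewrite !mulr_ge0 // ltW.
  have h6 := ler_wpM2l h5 h2.
  nra.
have h : (fun y => (1 - expR (- B y)) + expR (- A y - B y) * ((expR (S y) - 1) / (1 - expR (- A y)))) @ +oo --> 0 + 1 * L by apply: cvgD => //; apply: cvgM.
by rewrite add0r mul1r in h.
Unshelve. all: by end_near. Qed.
Lemma cvg_near_eq {R : realType} (f g : R -> R) (l : R) :
  (\forall y \near +oo, f y = g y) -> g @ +oo --> l -> f @ +oo --> l.
Proof.
move=> e hg; have e' : {near +oo, g =1 f} by near=> y; rewrite (near e y).
exact: cvg_trans (near_eq_cvg e') hg.
Unshelve. all: by end_near. Qed.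

Lemma frac_lim {R : realType} (q : R -> R) : q @ +oo --> 0 ->
  (fun y => q y / (q y + 1)) @ +oo --> 0 /\ (fun y => (1 + q y)^-1) @ +oo --> (1:R).
Proof.
move=> hq.
have h1 : (fun y => 1 + q y) @ +oo --> (1 + 0 : R) by apply: cvgD => //; exact: cvg_cst.
rewrite addr0 in h1.
have h2 : (fun y => (1 + q y)^-1) @ +oo --> (1^-1 : R) by apply: cvgV => //; exact: oner_neq0.
rewrite invr1 in h2; split => //.
have h3 : (fun y => q y * (1 + q y)^-1) @ +oo --> (0 * 1 : R) by apply: cvgM.
rewrite mul0r in h3; apply: cvg_near_eq h3; near=> y; by rewrite addrC.
Unshelve. all: by end_near. Qed.

Lemma r1_lim {R : realType} (a : R) : 0 < a ->
  (fun y : R => y^-1 / (y^-1 + (y `^ a)^-1)) @ +oo -->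
    ((if a < 1 then 0 else if a == 1 then 1/2 else 1) : R).
Proof.
move=> a0; case: ltgtP => [a1|a1|a1].
- have b0 : 0 < 1 - a by rewrite subr_gt0.
  have := frac_lim _ (powRN_cvg0 _ b0) => -[h _].
  apply: cvg_near_eq h; near=> y.
  have y0 : 0 < y by near: y; exact: nbhs_pinfty_gt.
  have ya : 0 < y `^ a by apply: powR_gt0.
  rewrite powRN powRB ?gt_eqF ?orbT ?implybT // powRr1 ?ltW //.
  field; rewrite ?gt_eqF ?lt0r_neq0 //; rewrite ?invr_gt0 //.
  by rewrite addr_gt0.
- have b0 : 0 < a - 1 by rewrite subr_gt0.
  have := frac_lim _ (powRN_cvg0 _ b0) => -[_ h].
  apply: cvg_near_eq h; near=> y.
  have y0 : 0 < y by near: y; exact: nbhs_pinfty_gt.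
  have ya : 0 < y `^ a by apply: powR_gt0.
  rewrite opprB powRB; last by rewrite (gt_eqF y0) implybT.
  rewrite powRr1; last exact: ltW.
  field; rewrite ?gt_eqF ?lt0r_neq0 //; rewrite ?invr_gt0 //.
  by rewrite addr_gt0.
- apply: (@cvg_near_eq _ _ (fun=> 1/2)); last exact: cvg_cst.
  near=> y.
  have y0 : 0 < y by near: y; exact: nbhs_pinfty_gt.
  rewrite a1 powRr1 ?ltW //.
  by field; rewrite ?gt_eqF ?lt0r_neq0 // addr_gt0 // invr_gt0.
Unshelve. all: by end_near. Qed.
Lemma A_lim {R : realType} (a : R) : 0 < a ->
  (fun y : R => y^-1 + (y `^ a)^-1) @ +oo --> 0.
Proof.
move=> a0; rewrite -[X in _ --> X](addr0 0).
have h1 : (fun y : R => y^-1) @ +oo --> 0.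
  apply: cvg_near_eq (powRN_cvg0 _ ltr01); near=> y.
  by rewrite powR_inv1 // ltW //; near: y; exact: nbhs_pinfty_gt.
have h2 : (fun y : R => (y `^ a)^-1) @ +oo --> 0.
  by apply: cvg_near_eq (powRN_cvg0 _ a0); near=> y; rewrite powRN.
by apply: cvgD.
Unshelve. all: by end_near. Qed.

Lemma r3_lim {R : realType} (a a' : R) : 0 < a -> a < a' ->
  (fun y : R => (y `^ a')^-1 / (y^-1 + (y `^ a)^-1)) @ +oo --> 0.
Proof.
move=> a0 aa; have b0 : 0 < a' - a by rewrite subr_gt0.
apply: (@squeeze_cvgr _ _ _ _ (fun=> 0) (fun y => y `^ (- (a' - a)))); last exact: powRN_cvg0.
  near=> y; have y0 : 0 < y by near: y; exact: nbhs_pinfty_gt.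
  have ya : 0 < y `^ a by apply: powR_gt0.
  have ya' : 0 < y `^ a' by apply: powR_gt0.
  have s0 : 0 < y^-1 + (y `^ a)^-1 by rewrite addr_gt0 ?invr_gt0.
  apply/andP; split; first by rewrite divr_ge0 // ltW // invr_gt0.
  rewrite opprB powRB; last by rewrite (gt_eqF y0) implybT.
  rewrite ler_pdivrMr // mulrDr.
  have -> : y `^ a / y `^ a' * (y `^ a)^-1 = (y `^ a')^-1 by field; rewrite ?lt0r_neq0.
  by rewrite lerDr mulr_ge0 // ?divr_ge0 ?invr_ge0 ?ltW.
exact: cvg_cst.
Unshelve. all: by end_near. Qed.
Lemma condP_formula {d : measure_display} {T : measurableType d} {R : realType}
  (P : probability T R) (EU EV : set T) (A B C : R) :
  measurable EU -> measurable EV -> 0 < A ->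
  P EU = (expR (- A))%:E -> P EV = (expR (- B))%:E -> P (EU `&` EV) = (expR (- C))%:E ->
  condP P (~` EV) (~` EU) =
  (1 - expR (- B)) + expR (- A - B) * ((expR (A + B - C) - 1) / (1 - expR (- A))).
Proof.
move=> mU mV A0 pU pV pJ.
have pJ' : P (EV `&` EU) = (expR (- C))%:E by rewrite setIC.
rewrite /condP -setCU !probability_setC //; last exact: measurableU.
rewrite measureUfinl //; last by rewrite -ge0_fin_numE // fin_num_measure.
rewrite pU.
transitivity (fine (1 - ((expR (- B))%:E + (expR (- A))%:E - (expR (- C))%:E)) / fine (1 - (expR (- A))%:E)).
  congr (fine (1 - (_ + _ - _)) / _); [exact: pV | exact: pU | exact: pJ'].
rewrite /=.
have d0 : 1 - expR (- A) != 0 by rewrite subr_eq0 eq_sym (lt_eqF) // expR_lt1 oppr_lt0.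
have hE : expR (- A - B) * expR (A + B - C) = expR (- C) by rewrite -expRD; congr expR; ring.
have hAB : expR (- A - B) = expR (- A) * expR (- B) by rewrite -expRD.
rewrite mulrA mulrBr mulr1 hE hAB.
by field.
Qed.
Lemma prod_expR {R : realType} (J : Type) (s : seq J) (f : J -> R) :
  (\prod_(p <- s) (expR (- f p))%:E)%E = (expR (- \sum_(p <- s) f p))%:E.
Proof.
elim: s => [|p s IH]; first by rewrite !big_nil oppr0 expR0.
by rewrite !big_cons IH -EFinM -expRD opprD.
Qed.

Lemma nth_index_uniq {R : realType} (I : eqType) (s : seq (I * R)) (p : I * R) :
  uniq (map fst s) -> p \in s -> nth 0 (map snd s) (index p.1 (map fst s)) = p.2.
Proof.
elim: s => [//|q s IH] /= /andP[qs us]; rewrite in_cons => /orP[/eqP->|ps].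
  by rewrite eqxx.
case: eqP => [e|_]; last by rewrite /= IH.
by move: qs; rewrite e (map_f fst ps).
Qed.

Lemma indep_prod {d : measure_display} {T : measurableType d} {R : realType}
  (P : probability T R) (I : eqType) (W : I -> T -> R) (s : seq (I * R)) :
  mutually_independent P W -> (forall i, std_frechet P (W i)) ->
  uniq (map fst s) -> all (fun p => 0 < p.2) s ->
  P (\big[setI/setT]_(p <- s) (W p.1 @^-1` `]-oo, p.2])) =
  (expR (- \sum_(p <- s) p.2^-1))%:E.
Proof.
move=> [_ ind] fr us pos.
pose c i := nth 0 (map snd s) (index i (map fst s)).
have hc p : p \in s -> c p.1 = p.2 by move=> ps; exact: nth_index_uniq.
have -> : \big[setI/setT]_(p <- s) (W p.1 @^-1` `]-oo, p.2]) =
    \big[setI/setT]_(i <- map fst s) (W i @^-1` `]-oo, c i]).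
  by rewrite big_map; apply: eq_big_seq => p ps; rewrite hc.
rewrite (ind _ (fun i => [set` `]-oo, c i]]) us); last by move=> i; exact: measurable_itv.
rewrite big_map -prod_expR; apply: eq_big_seq => p ps.
rewrite hc // fr //; exact: (allP pos).
Qed.
Lemma powle {R : realType} (z y a : R) : 1 <= y -> 0 < a ->
  (z `^ a^-1 <= y) = (z <= y `^ a).
Proof.
move=> y1 a0; have y0 : 0 < y by apply: (lt_le_trans ltr01).
have ai0 : a^-1 != 0 by rewrite invr_neq0 // gt_eqF.
case: (ltgtP z 0) => [z0|z0|->].
- rewrite {1}/powR (lt_eqF z0) (ln0 (ltW z0)) mulr0 expR0 y1.
  by apply/esym; rewrite (le_trans (ltW z0)) // powR_ge0.
- apply/idP/idP => h.
    rewrite -[z](@powRr1 _ z (ltW z0)) -(mulVf (lt0r_neq0 a0)) powRrM.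
    apply: ge0_ler_powR => //; first exact: ltW.
      by rewrite nnegrE powR_ge0.
    by rewrite nnegrE (le_trans (powR_ge0 _ _) h).
  rewrite -[y](@powRr1 _ y (ltW y0)) -(mulfV (lt0r_neq0 a0)) powRrM.
  apply: ge0_ler_powR => //; first by rewrite invr_ge0 ltW.
    by rewrite nnegrE ltW.
  by rewrite nnegrE powR_ge0.
- by rewrite powR0 // ltW // powR_ge0.
Qed.

Lemma Yle {T : Type} {R : realType} (Xh : nat -> R * R -> T -> R) (Z : nat -> T -> R)
  (alpha : R * R -> R) (n : nat) (x : R * R) (t : T) (y : R) :
  1 <= y -> 0 < alpha x ->
  (Yfield Xh Z alpha n x t <= y) =
  [&& Xh n x t <= 3/2 * y, Xh n.-1 x t <= 3 * y & Z n t <= y `^ alpha x].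
Proof.
move=> y1 a0; rewrite /Yfield /Xfield !ge_max powle // andbA.
congr (_ && _); congr (_ && _); apply/idP/idP => h; lra.
Qed.
Lemma setC_le {T : Type} {R : realType} (U : T -> R) (y : R) :
  [set t | y < U t] = ~` [set t | U t <= y].
Proof.
by apply/seteqP; split => t /=; rewrite ltNge => /negP.
Qed.

Lemma tail_case {d : measure_display} {T : measurableType d} {R : realType}
  (P : probability T R) (U V : T -> R) (A B C S : R -> R) (L : R) :
  (\forall y \near +oo, [/\ measurable [set t | U t <= y], measurable [set t | V t <= y],
      P [set t | U t <= y] = (expR (- A y))%:E, P [set t | V t <= y] = (expR (- B y))%:E &
      [/\ P ([set t | U t <= y] `&` [set t | V t <= y]) = (expR (- C y))%:E,
          A y + B y - C y = S y, 0 < A y & 0 <= S y]]) ->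
  A @ +oo --> 0 -> B @ +oo --> 0 -> (fun y => S y / A y) @ +oo --> L ->
  tail_dep P V U L.
Proof.
move=> H hA hB hSA; rewrite /tail_dep.
have pos : \forall y \near +oo, 0 < A y /\ 0 <= S y.
  by near=> y; have /(_ _)[//|_ _ _ _ [_ _ ? ?]] := near H y.
apply: cvg_near_eq; last exact: (key_lim _ _ _ _ pos hA hB hSA).
near=> y; have /(_ _)[//|mU mV pU pV [pJ eS A0 S0]] := near H y.
by rewrite !setC_le (condP_formula P _ _ _ _ _ mU mV A0 pU pV pJ) eS.
Unshelve. all: by end_near. Qed.
Lemma eq_inl (A B : eqType) (a b : A) : (inl a == inl b :> A + B) = (a == b).
Proof. by apply/eqP/eqP => [[]|->]. Qed.
Lemma eq_inr (A B : eqType) (a b : B) : (inr a == inr b :> A + B) = (a == b).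
Proof. by apply/eqP/eqP => [[]|->]. Qed.
Lemma eq_inlr (A B : eqType) (a : A) (b : B) : (inl a == inr b :> A + B) = false.
Proof. by apply/eqP. Qed.
Lemma eq_inrl (A B : eqType) (a : A) (b : B) : (inr b == inl a :> A + B) = false.
Proof. by apply/eqP. Qed.

Definition Wf {T : Type} {R : realType} (Xh : nat -> R * R -> T -> R) (Z : nat -> T -> R)
  (i : (nat * (R * R)) + nat) : T -> R :=
  match i with inl nx => Xh nx.1 nx.2 | inr m => Z m.+1 end.

Definition sY {R : realType} (alpha : R * R -> R) (n : nat) (x : R * R) (y : R) :
  seq (((nat * (R * R)) + nat) * R) :=
  [:: (inl (n, x), 3/2 * y); (inl (n.-1, x), 3 * y); (inr n.-1, y `^ alpha x)].

Definition capW {T : Type} {R : realType} {I : Type} (W : I -> T -> R) (s : seq (I * R)) : set T :=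
  \big[setI/setT]_(p <- s) (W p.1 @^-1` `]-oo, p.2]).

Lemma capW_cat {T : Type} {R : realType} {I : Type} (W : I -> T -> R) (s1 s2 : seq (I * R)) :
  capW W (s1 ++ s2) = capW W s1 `&` capW W s2.
Proof. by rewrite /capW big_cat. Qed.

Lemma capW_meas {d : measure_display} {T : measurableType d} {R : realType} {I : Type}
  (W : I -> T -> R) (s : seq (I * R)) :
  (forall i, measurable_fun setT (W i)) -> measurable (capW W s).
Proof.
move=> mW; rewrite /capW; apply: (big_ind (fun A => measurable A)) => //.
  by move=> A B mA mB; apply: measurableI.
move=> p _; rewrite -(setTI (_ @^-1` _)); apply: mW => //; exact: measurable_itv.
Qed.

Lemma EY {T : Type} {R : realType} (Xh : nat -> R * R -> T -> R) (Z : nat -> T -> R)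
  (alpha : R * R -> R) (n : nat) (x : R * R) (y : R) :
  (1 <= n)%N -> 1 <= y -> 0 < alpha x ->
  [set t | Yfield Xh Z alpha n x t <= y] = capW (Wf Xh Z) (sY alpha n x y).
Proof.
case: n => // n _ y1 a0; rewrite /capW !big_cons big_nil.
apply/seteqP; split => t /=; rewrite Yle //= !in_itv /=.
  by move=> /and3P[-> -> ->].
by move=> [-> [-> [-> _]]].
Qed.

Lemma sumY {R : realType} (alpha : R * R -> R) (n : nat) (x : R * R) (y : R) :
  0 < y -> 0 < alpha x ->
  \sum_(p <- sY alpha n x y) p.2^-1 = y^-1 + (y `^ alpha x)^-1.
Proof.
move=> y0 a0; have ya : 0 < y `^ alpha x by apply: powR_gt0.
rewrite !big_cons big_nil /=; field.
by rewrite !lt0r_neq0.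
Qed.
Lemma PY {d : measure_display} {T : measurableType d} {R : realType} (P : probability T R)
  (Xh : nat -> R * R -> T -> R) (Z : nat -> T -> R) (alpha : R * R -> R)
  (n : nat) (x : R * R) (y : R) :
  mutually_independent P (Wf Xh Z) -> (forall i, std_frechet P (Wf Xh Z i)) ->
  (1 <= n)%N -> 1 <= y -> 0 < alpha x ->
  measurable [set t | Yfield Xh Z alpha n x t <= y] /\
  P [set t | Yfield Xh Z alpha n x t <= y] = (expR (- (y^-1 + (y `^ alpha x)^-1)))%:E.
Proof.
move=> ind fr n1 y1 a0; have y0 : 0 < y by apply: (lt_le_trans ltr01).
rewrite EY //; split; first exact: capW_meas (proj1 ind).
rewrite /capW indep_prod // ?sumY //.
  by case: n n1 => // n _; rewrite /= !inE /= !(eq_inl, eq_inr, eq_inlr, eq_inrl, xpair_eqE) !eqxx ?andbT ?andbF ?orbF /=; lia.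
by rewrite /= !mulr_gt0 ?powR_gt0.
Qed.

Lemma case_indep {d : measure_display} {T : measurableType d} {R : realType} (P : probability T R)
  (Xh : nat -> R * R -> T -> R) (Z : nat -> T -> R) (alpha : R * R -> R)
  (n m : nat) (x x' : R * R) :
  mutually_independent P (Wf Xh Z) -> (forall i, std_frechet P (Wf Xh Z i)) ->
  (forall x, 0 < alpha x) -> (1 <= n)%N -> (1 <= m)%N ->
  uniq [:: (inl (n, x) : (nat * (R * R)) + nat); inl (n.-1, x); inr n.-1;
           inl (m, x'); inl (m.-1, x'); inr m.-1] ->
  tail_dep P (Yfield Xh Z alpha m x') (Yfield Xh Z alpha n x) 0.
Proof.
move=> ind fr apos n1 m1 us.
apply: (tail_case P _ _ (fun y => y^-1 + (y `^ alpha x)^-1)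
  (fun y => y^-1 + (y `^ alpha x')^-1)
  (fun y => (y^-1 + (y `^ alpha x)^-1) + (y^-1 + (y `^ alpha x')^-1))
  (fun=> 0)); last first.
- apply: (cvg_near_eq _ (fun=> 0)); last exact: cvg_cst.
  by near=> y; rewrite mul0r.
- exact: A_lim.
- exact: A_lim.
near=> y; have y1 : 1 <= y by near: y; apply: nbhs_pinfty_ge; exact: num_real.
have y0 : 0 < y by apply: (lt_le_trans ltr01).
have [mU pU] := PY P Xh Z alpha n x y ind fr n1 y1 (apos x).
have [mV pV] := PY P Xh Z alpha m x' y ind fr m1 y1 (apos x').
split => //; split => //.
- rewrite (EY _ _ _ _ _ _ n1) // (EY _ _ _ _ _ _ m1) // -capW_cat /capW indep_prod //.
    by rewrite big_cat !sumY.
  by rewrite /= !mulr_gt0 ?powR_gt0.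
- by rewrite subrr.
- by rewrite addr_gt0 ?invr_gt0 ?powR_gt0.
Unshelve. all: by end_near. Qed.
Lemma case_a {d : measure_display} {T : measurableType d} {R : realType} (P : probability T R)
  (Xh : nat -> R * R -> T -> R) (Z : nat -> T -> R) (alpha : R * R -> R)
  (n : nat) (x : R * R) :
  mutually_independent P (Wf Xh Z) -> (forall i, std_frechet P (Wf Xh Z i)) ->
  (forall x, 0 < alpha x) -> (1 <= n)%N ->
  tail_dep P (Yfield Xh Z alpha n.+1 x) (Yfield Xh Z alpha n x)
    (1/3 * (if alpha x < 1 then 0 else if alpha x == 1 then 1/2 else 1)).
Proof.
move=> ind fr apos n1.
have a0 := apos x.
pose sJ (y : R) : seq (((nat * (R * R)) + nat) * R) :=
  [:: (inl (n, x), 3/2 * y); (inl (n.-1, x), 3 * y); (inr n.-1, y `^ alpha x);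
      (inl (n.+1, x), 3/2 * y); (inr n, y `^ alpha x)].
apply: (tail_case P _ _ (fun y => y^-1 + (y `^ alpha x)^-1)
  (fun y => y^-1 + (y `^ alpha x)^-1)
  (fun y => \sum_(p <- sJ y) p.2^-1)
  (fun y => (3 * y)^-1)); last first.
- have h := r1_lim _ a0.
  have h2 : (fun y => 1/3 * (y^-1 / (y^-1 + (y `^ alpha x)^-1))) @ +oo -->
      (1/3 * (if alpha x < 1 then 0 else if alpha x == 1 then 1/2 else 1) : R).
    exact: cvgMr.
  apply: (cvg_near_eq _ _ _ _ h2); near=> y.
  have y0 : 0 < y by near: y; exact: nbhs_pinfty_gt.
  have ya : 0 < y `^ alpha x by apply: powR_gt0.
  by field; rewrite ?lt0r_neq0 ?addr_gt0 ?invr_gt0.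
- exact: A_lim.
- exact: A_lim.
near=> y; have y1 : 1 <= y by near: y; apply: nbhs_pinfty_ge; exact: num_real.
have y0 : 0 < y by apply: (lt_le_trans ltr01).
have ya : 0 < y `^ alpha x by apply: powR_gt0.
have [mU pU] := PY P Xh Z alpha n x y ind fr n1 y1 a0.
have [mV pV] := PY P Xh Z alpha n.+1 x y ind fr isT y1 a0.
split => //; split => //.
- rewrite (EY _ _ _ _ _ _ n1) // (EY _ _ _ _ _ _ (isT : (1 <= n.+1)%N)) //.
  have -> : capW (Wf Xh Z) (sY alpha n x y) `&` capW (Wf Xh Z) (sY alpha n.+1 x y) =
            capW (Wf Xh Z) (sJ y).
    rewrite /sJ; case: n n1 {mU pU mV pV sJ} => // n _.
    rewrite /capW !big_cons !big_nil; apply/seteqP; split => t /=; rewrite !in_itv /=.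
      by move=> [[-> [-> [-> _]]] [-> [_ [-> _]]]].
    move=> [a1 [a2 [a3 [b1 [b3 _]]]]]; do !split => //; lra.
  rewrite /capW indep_prod //.
    by rewrite /sJ; case: n n1 {mU pU mV pV sJ} => // n _; rewrite /= !inE /= !(eq_inl, eq_inr, eq_inlr, eq_inrl, xpair_eqE) !eqxx ?andbT ?andbF ?orbF /=; lia.
  by rewrite /= !mulr_gt0 ?powR_gt0.
- rewrite /sJ !big_cons big_nil /=; field.
  by rewrite !lt0r_neq0.
- by rewrite addr_gt0 ?invr_gt0 ?powR_gt0.
- by rewrite invr_ge0 mulr_ge0 // ltW.
Unshelve. all: by end_near. Qed.
Lemma case_d {d : measure_display} {T : measurableType d} {R : realType} (P : probability T R)
  (Xh : nat -> R * R -> T -> R) (Z : nat -> T -> R) (alpha : R * R -> R)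
  (n : nat) (x x' : R * R) :
  mutually_independent P (Wf Xh Z) -> (forall i, std_frechet P (Wf Xh Z i)) ->
  (forall x, 0 < alpha x) -> (1 <= n)%N -> x != x' ->
  tail_dep P (Yfield Xh Z alpha n x') (Yfield Xh Z alpha n x)
    (if (alpha x' <= alpha x) && (alpha x < 1) then 1
     else if (alpha x' <= alpha x) && (alpha x == 1) then 1/2 else 0).
Proof.
move=> ind fr apos n1 xx.
have a0 := apos x; have a0' := apos x'.
pose sJ (y : R) : seq (((nat * (R * R)) + nat) * R) :=
  [:: (inl (n, x), 3/2 * y); (inl (n.-1, x), 3 * y);
      (inr n.-1, Num.min (y `^ alpha x) (y `^ alpha x'));
      (inl (n, x'), 3/2 * y); (inl (n.-1, x'), 3 * y)].
have Hgen (S : R -> R) (L : R) :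
    (\forall y \near +oo, (y `^ alpha x)^-1 + (y `^ alpha x')^-1
       - (Num.min (y `^ alpha x) (y `^ alpha x'))^-1 = S y /\ 0 <= S y) ->
    (fun y => S y / (y^-1 + (y `^ alpha x)^-1)) @ +oo --> L ->
    tail_dep P (Yfield Xh Z alpha n x') (Yfield Xh Z alpha n x) L.
  move=> HS hSA.
  apply: (tail_case P _ _ (fun y => y^-1 + (y `^ alpha x)^-1)
    (fun y => y^-1 + (y `^ alpha x')^-1)
    (fun y => \sum_(p <- sJ y) p.2^-1) S) => //; [|exact: A_lim|exact: A_lim].
  near=> y; have y1 : 1 <= y by near: y; apply: nbhs_pinfty_ge; exact: num_real.
  have y0 : 0 < y by apply: (lt_le_trans ltr01).
  have ya : 0 < y `^ alpha x by apply: powR_gt0.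
  have ya' : 0 < y `^ alpha x' by apply: powR_gt0.
  have [eS S0] : (y `^ alpha x)^-1 + (y `^ alpha x')^-1
       - (Num.min (y `^ alpha x) (y `^ alpha x'))^-1 = S y /\ 0 <= S y by near: y.
  have [mU pU] := PY P Xh Z alpha n x y ind fr n1 y1 a0.
  have [mV pV] := PY P Xh Z alpha n x' y ind fr n1 y1 a0'.
  have mp : 0 < Num.min (y `^ alpha x) (y `^ alpha x') by rewrite lt_min ya ya'.
  split => //; split => //.
  - rewrite (EY _ _ _ _ _ _ n1) // (EY _ _ _ _ _ _ n1) //.
    have -> : capW (Wf Xh Z) (sY alpha n x y) `&` capW (Wf Xh Z) (sY alpha n x' y) =
              capW (Wf Xh Z) (sJ y).
      rewrite /sJ; case: n n1 {mU pU mV pV sJ} => // n _.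
      rewrite /capW !big_cons !big_nil; apply/seteqP; split => t /=; rewrite !in_itv /= ?le_min.
        by move=> [[-> [-> [-> _]]] [-> [-> [-> _]]]].
      by move=> [-> [-> [/andP[-> ->] [-> [-> _]]]]].
    rewrite /capW indep_prod //.
      rewrite /sJ; case: n n1 {mU pU mV pV sJ} => // n _.
      have xx' : x' != x by rewrite eq_sym.
      rewrite /= !inE /= !(eq_inl, eq_inr, eq_inlr, eq_inrl, xpair_eqE) !eqxx ?(negbTE xx) ?(negbTE xx') ?andbT ?andbF ?orbF /=; lia.
    by rewrite /= mp !mulr_gt0.
  - rewrite /sJ !big_cons big_nil /= -eS; field.
    by rewrite !lt0r_neq0.
  - by rewrite addr_gt0 ?invr_gt0 ?powR_gt0.
have [aa|aa] := leP (alpha x') (alpha x).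
- rewrite /=.
  apply: (Hgen (fun y => (y `^ alpha x)^-1)).
    near=> y; have y1 : 1 <= y by near: y; apply: nbhs_pinfty_ge; exact: num_real.
    rewrite min_r; last by rewrite ler_powR.
    rewrite addrK; split => //.
    by rewrite invr_ge0 powR_ge0.
  have h := r1_lim _ a0.
  have h2 : (fun y => 1 - y^-1 / (y^-1 + (y `^ alpha x)^-1)) @ +oo -->
      (1 - (if alpha x < 1 then 0 else if alpha x == 1 then 1/2 else 1) : R).
    by apply: cvgB => //; exact: cvg_cst.
  have -> : (if alpha x < 1 then 1 else if alpha x == 1 then 1/2 else 0) =
      (1 - (if alpha x < 1 then 0 else if alpha x == 1 then 1/2 else 1) : R).
    by case: ifP => _; [rewrite subr0|case: ifP => _; [|rewrite subrr]] => //; field.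
  apply: (cvg_near_eq _ _ _ _ h2); near=> y.
  have y0 : 0 < y by near: y; exact: nbhs_pinfty_gt.
  have ya : 0 < y `^ alpha x by apply: powR_gt0.
  by field; rewrite ?lt0r_neq0 ?addr_gt0 ?invr_gt0.
- rewrite /=.
  apply: (Hgen (fun y => (y `^ alpha x')^-1)).
    near=> y; have y1 : 1 <= y by near: y; apply: nbhs_pinfty_ge; exact: num_real.
    rewrite min_l; last by rewrite ler_powR // ltW.
    rewrite addrC addKr; split => //.
    by rewrite invr_ge0 powR_ge0.
  exact: r3_lim.
Unshelve. all: by end_near. Qed.
Theorem mainTheorem3 (d : measure_display) (T : measurableType d) (R : realType)
  (P : probability T R)
  (Xh : nat -> R * R -> T -> R) (Z : nat -> T -> R) (alpha : R * R -> R) :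
  (* all Xh_n(x) (n >= 0, x in R^2) and Z_m (m >= 1) are mutually independent *)
  mutually_independent P
    (fun i : (nat * (R * R)) + nat =>
       match i with inl nx => Xh nx.1 nx.2 | inr m => Z m.+1 end) ->
  (forall n x, std_frechet P (Xh n x)) ->
  (forall m, (1 <= m)%N -> std_frechet P (Z m)) ->
  (forall x, 0 < alpha x) ->
  (forall (n r : nat) (x : R * R), (1 <= n)%N -> (1 <= r)%N ->
     tail_dep P (Yfield Xh Z alpha (n + r) x) (Yfield Xh Z alpha n x)
       (if (alpha x < 1) || (1 < r)%N then 0
        else if alpha x == 1 then 1/6 else 1/3)) /\
  (forall (n r : nat) (x x' : R * R), (1 <= n)%N -> (1 <= r)%N -> x != x' ->
     tail_dep P (Yfield Xh Z alpha (n + r) x') (Yfield Xh Z alpha n x) 0) /\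
  (forall (n : nat) (x x' : R * R), (1 <= n)%N -> x != x' ->
     tail_dep P (Yfield Xh Z alpha n x') (Yfield Xh Z alpha n x)
       (if (alpha x' <= alpha x) && (alpha x < 1) then 1
        else if (alpha x' <= alpha x) && (alpha x == 1) then 1/2 else 0)).
Proof.
move=> ind0 frX frZ apos.
have ind : mutually_independent P (Wf Xh Z) by exact: ind0.
have fr : forall i, std_frechet P (Wf Xh Z i).
  by case => [[n x]|m]; [exact: frX | exact: frZ].
split; [|split].
- move=> n r x n1 r1.
  have [->|r_ne] := eqVneq r 1%N.
    rewrite addn1 orbF.
    have h := case_a P Xh Z alpha n x ind fr apos n1.
    have -> : (if alpha x < 1 then 0 else if alpha x == 1 then 1 / 6 else 1 / 3) =
      (1/3 * (if alpha x < 1 then 0 else if alpha x == 1 then 1/2 else 1) : R).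
      by case: ifP => _; [rewrite mulr0|case: ifP => _]; field.
    exact: h.
  have r2 : (1 < r)%N by lia.
  rewrite r2 orbT.
  apply: case_indep => //; first lia.
  case: n n1 => // n _; rewrite addSn /=.
  rewrite !inE /= !(eq_inl, eq_inr, eq_inlr, eq_inrl, xpair_eqE) !eqxx ?andbT ?andbF ?orbF /=; lia.
- move=> n r x x' n1 r1 xx.
  apply: case_indep => //; first lia.
  have xx' : x' != x by rewrite eq_sym.
  case: n n1 => // n _; rewrite addSn /=.
  rewrite !inE /= !(eq_inl, eq_inr, eq_inlr, eq_inrl, xpair_eqE) !eqxx ?(negbTE xx) ?(negbTE xx') ?andbT ?andbF ?orbF /=; lia.
- move=> n x x' n1 xx.
  exact: case_d.
Qed.
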